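(* Let $A,B$ be commutative rings with identity, $f:A\to B$ a ring homomorphism and $J$ an ideal of $B$, regarded as an $A$-module via $f$. (a) Assume that $A$ is Cohen–Macaulay in the sense of ideals and that $\operatorname{Kgrade}_A(\mathfrak a,J)\ge\operatorname{ht}\mathfrak a$ for every ideal $\mathfrak a$ of $A$. Then for every ideal $\mathfrak a$ of $A$, $$\operatorname{Kgrade}_{A\bowtie^f J}(\mathfrak a^e,A\bowtie^f J)=\operatorname{Kgrade}_A(\mathfrak a,A)\le\operatorname{Kgrade}_A(\mathfrak a,J).$$ (b) The same holds with ''ideal'' replaced throughout by ''finitely generated ideal'': if $A$ is Cohen–Macaulay in the sense of finitely generated ideals and $\operatorname{Kgrade}_A(\mathfrak a,J)\ge\operatorname{ht}\mathfrak a$ for every finitely generated ideal $\mathfrak a$ of $A$, then the displayed relation holds for every finitely generated ideal $\mathfrak a$ of $A$.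
   Context: The amalgamation is the subring $A\bowtie^fJ=\{(a,f(a)+j): a\in A,\ j\in J\}$ of $A\times B$; $\iota_A:A\to A\bowtie^fJ$, $\iota_A(x)=(x,f(x))$, and for an ideal $\mathfrak a$ of $A$, $\mathfrak a^e=\iota_A(\mathfrak a)(A\bowtie^fJ)$. Koszul grade: for a ring $R$, an $R$-module $M$ and a finitely generated ideal $\mathfrak b=(x_1,\dots,x_\ell)$, $\operatorname{Kgrade}_R(\mathfrak b,M)=\inf\{i\ge0: H^i(\operatorname{Hom}_R(\mathbb K_\bullet(x_1,\dots,x_\ell),M))\ne0\}$ ($\inf\emptyset=\infty$), independent of generators; for an arbitrary ideal $\mathfrak a$, $\operatorname{Kgrade}_R(\mathfrak a,M)=\sup$ of $\operatorname{Kgrade}_R(\mathfrak b,M)$ over finitely generated ideals $\mathfrak b\subseteq\mathfrak a$. The height of an ideal $\mathfrak a$ of $R$ is $\operatorname{ht}\mathfrak a=\inf\{\dim R_\mathfrak p:\mathfrak p\in\operatorname{Spec}R,\ \mathfrak a\subseteq\mathfrak p\}$. For a nonempty class $\mathcal C$ of ideals of $R$, $R$ is Cohen–Macaulay in the sense of $\mathcal C$ if $\operatorname{ht}\mathfrak a=\operatorname{Kgrade}_R(\mathfrak a,R)$ for all $\mathfrak a\in\mathcal C$; ''in the sense of ideals'' (resp. ''finitely generated ideals'') refers to the class of all (resp. all finitely generated) ideals. *)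

(* Defs.v *)
From HB Require Import structures.
From mathcomp Require Import all_boot all_algebra.
From Stdlib Require Import ClassicalEpsilon.
Set Implicit Arguments. Unset Strict Implicit. Unset Printing Implicit Defensive.
Import GRing.Theory.
Local Open Scope ring_scope.

(** * Extended naturals  N ∪ {∞}  (None = ∞), with glb/lub *)
Definition enat := option nat.
Definition ele (x y : enat) : Prop :=
  match y with
  | None => True
  | Some n => match x with None => False | Some m => (m <= n)%N end
  end.
Definition is_glb (S : enat -> Prop) (x : enat) :=
  (forall y, S y -> ele x y) /\ (forall z, (forall y, S y -> ele z y) -> ele z x).
Definition is_lub (S : enat -> Prop) (x : enat) :=
  (forall y, S y -> ele y x) /\ (forall z, (forall y, S y -> ele y z) -> ele x z).
(** infimum (inf of the empty set is ∞) and supremum in the complete lattice enat *)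
Definition einf (S : enat -> Prop) : enat := epsilon (inhabits None) (is_glb S).
Definition esup (S : enat -> Prop) : enat := epsilon (inhabits (Some 0%N)) (is_lub S).

Definition is_ideal (R : comPzRingType) (I : R -> Prop) : Prop :=
  I 0 /\ (forall x y, I x -> I y -> I (x + y)) /\ (forall r x, I x -> I (r * x)).

Definition is_prime_ideal (R : comPzRingType) (p : R -> Prop) : Prop :=
  is_ideal p /\ ~ p 1 /\ (forall x y, p (x * y) -> p x \/ p y).

Definition fg_ideal (R : comPzRingType) (I : R -> Prop) : Prop :=
  exists n (x : 'I_n -> R), forall y, I y <-> exists r : 'I_n -> R, y = \sum_i r i * x i.

Definition prime_chain (R : comPzRingType) (n : nat) (c : nat -> R -> Prop) : Prop :=
  (forall i, (i <= n)%N -> is_prime_ideal (c i)) /\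
  (forall i, (i < n)%N ->
     (forall y, c i y -> c i.+1 y) /\ exists y, c i.+1 y /\ ~ c i y).

Definition prime_height (R : comPzRingType) (p : R -> Prop) : enat :=
  esup (fun h => exists n (c : nat -> R -> Prop),
          h = Some n /\ prime_chain n c /\ forall y, c n y <-> p y).

Definition height (R : comPzRingType) (a : R -> Prop) : enat :=
  einf (fun h => exists p : R -> Prop,
          is_prime_ideal p /\ (forall y, a y -> p y) /\ h = prime_height p).

(** * Koszul cohomology  H^i(Hom_R(K(x_0..x_{l-1}), M))
   M is a submodule (predicate) of a ring T, R acting through g : R -> T.
   Hom_R(K_i, M) = functions on i-subsets of 'I_l with values in M. *)
Definition koszul_cochain (T : comPzRingType) (M : T -> Prop) (l i : nat)
  (phi : {set 'I_l} -> T) : Prop :=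
  (forall S, M (phi S)) /\ (forall S : {set 'I_l}, #|S| != i -> phi S = 0).

Definition koszul_diff (R T : comPzRingType) (g : R -> T) (l : nat) (x : 'I_l -> R)
  (phi : {set 'I_l} -> T) : {set 'I_l} -> T :=
  fun S => \sum_(j in S) (-1) ^+ #|[set k in S | (k < j)%N]| * g (x j) * phi (S :\ j).

Definition koszul_cohom_nonzero (R T : comPzRingType) (g : R -> T) (M : T -> Prop)
  (l : nat) (x : 'I_l -> R) (i : nat) : Prop :=
  exists phi, koszul_cochain M i phi /\ (forall S, koszul_diff g x phi S = 0) /\
   ~ ((forall S, phi S = 0) \/
      ((0 < i)%N /\ exists psi, koszul_cochain M i.-1 psi /\
                                 forall S, koszul_diff g x psi S = phi S)).

Definition Kgrade_seq (R T : comPzRingType) (g : R -> T) (M : T -> Prop)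
  (l : nat) (x : 'I_l -> R) : enat :=
  einf (fun h => exists i, h = Some i /\ koszul_cohom_nonzero g M x i).

Definition Kgrade (R T : comPzRingType) (g : R -> T) (M : T -> Prop) (a : R -> Prop) : enat :=
  esup (fun h => exists l (x : 'I_l -> R), (forall j, a (x j)) /\ h = Kgrade_seq g M x).

Definition CM_in (R : comPzRingType) (C : (R -> Prop) -> Prop) : Prop :=
  forall a, C a -> height a = Kgrade (fun r : R => r) (fun _ => True) a.

Definition amalg (A B : comPzRingType) (f : A -> B) (J : B -> Prop) : A * B -> Prop :=
  fun z => exists j, J j /\ z.2 = f z.1 + j.

Definition ext_ideal (A B : comPzRingType) (f : A -> B) (J : B -> Prop) (a : A -> Prop)
  : A * B -> Prop :=
  fun y => exists n (u : 'I_n -> A) (s : 'I_n -> A * B),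
    (forall i, a (u i)) /\ (forall i, amalg f J (s i)) /\
    y = \sum_i ((u i, f (u i)) : A * B) * s i.

(* Main.v *)
Require Import Defs.
From HB Require Import structures.
From mathcomp Require Import all_boot all_algebra ring.
From Stdlib Require Import Classical ClassicalEpsilon FunctionalExtensionality.
Set Implicit Arguments. Unset Strict Implicit. Unset Printing Implicit Defensive.


Lemma least_nat (P : nat -> Prop) : (exists n, P n) -> exists m, P m /\ forall k, P k -> (m <= k)%N.
Proof.
move=> [n Pn]; apply: NNPP => hn.
suff : forall N k, (k <= N)%N -> ~ P k by move/(_ n n (leqnn _)).
elim=> [|N IH] k kN Pk.
  apply: hn; exists k; split => // j _; by move: kN; rewrite leqn0 => /eqP ->.
case: (leqP k N) => h; first exact: IH h Pk.
apply: hn; exists k; split => // j Pj; rewrite leqNgt; apply/negP => jk.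
by apply: (IH j) Pj; rewrite -ltnS (leq_trans jk).
Qed.

Lemma ele_refl x : ele x x.
Proof. by case: x => //= n. Qed.

Lemma ele_trans x y z : ele x y -> ele y z -> ele x z.
Proof.
by case: z => [c|] //; case: y => [b|] //; case: x => [a|] //= ab bc; apply: leq_trans ab bc.
Qed.

Lemma ele_anti x y : ele x y -> ele y x -> x = y.
Proof.
case: x => [a|]; case: y => [b|] //= ab ba; congr Some; apply/eqP; by rewrite eqn_leq ab ba.
Qed.

Lemma ele_None x : ele x None.
Proof. by case: x. Qed.

Lemma glb_exists (S : enat -> Prop) : exists x, is_glb S x.
Proof.
case: (classic (exists n, S (Some n))) => [h|h].
  have [m [Sm mmin]] := least_nat h.
  exists (Some m); split.
    case=> [k|] //= Sk; exact: mmin.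
  by move=> z /(_ _ Sm).
exists None; split.
  case=> [k|] // Sk; by case: h; exists k.
by move=> z _; exact: ele_None.
Qed.

Lemma lub_exists (S : enat -> Prop) : exists x, is_lub S x.
Proof.
case: (classic (exists N, forall y, S y -> ele y (Some N))) => [h|h].
  have [m [Um mmin]] := least_nat h.
  exists (Some m); split => // z zub.
  case: z zub => [k|] zub //=; exact: mmin.
exists None; split => [y _|z zub]; first exact: ele_None.
case: z zub => [k|] zub //; by case: h; exists k.
Qed.

Lemma einf_spec S : is_glb S (einf S).
Proof. rewrite /einf; apply: epsilon_spec; exact: glb_exists. Qed.

Lemma esup_spec S : is_lub S (esup S).
Proof. rewrite /esup; apply: epsilon_spec; exact: lub_exists. Qed.

Lemma einf_le (P : nat -> Prop) i : P i -> ele (einf (fun h => exists i, h = Some i /\ P i)) (Some i).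
Proof. move=> Pi; apply: (proj1 (einf_spec _)); by exists i. Qed.

Lemma einf_some (P : nat -> Prop) i : einf (fun h => exists i, h = Some i /\ P i) = Some i -> P i.
Proof.
move=> E; apply: NNPP => nPi.
have [lb glb] := einf_spec (fun h => exists i, h = Some i /\ P i).
rewrite E in lb glb.
have : ele (Some i.+1) (Some i) by apply: glb => y [j [-> Pj]] /=; rewrite ltn_neqAle; apply/andP; split;
  [apply/eqP => ij; subst j; exact: nPi | exact: (lb _ (ex_intro _ j (conj erefl Pj)))].
by rewrite /= ltnn.
Qed.

Lemma esup_ub (S : enat -> Prop) y : S y -> ele y (esup S).
Proof. exact: (proj1 (esup_spec S)). Qed.

Lemma esup_least (S : enat -> Prop) z : (forall y, S y -> ele y z) -> ele (esup S) z.
Proof. exact: (proj2 (esup_spec S)). Qed.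

Lemma esup_approx (S : enat -> Prop) k : (exists y, S y) -> ele (Some k) (esup S) ->
  exists y, S y /\ ele (Some k) y.
Proof.
move=> [y0 Sy0] kle; apply: NNPP => hn.
case: k kle hn => [|k] kle hn.
  by apply: hn; exists y0; split => //; case: y0 {Sy0}.
have : ele (esup S) (Some k).
  apply: esup_least => y Sy; case: y Sy => [m|] Sy.
    rewrite /=; apply: NNPP => km; apply: hn; exists (Some m); split => //=.
    by rewrite ltnNge; apply/negP.
  by case: hn; exists None.
move=> h; have := ele_trans kle h; by rewrite /= ltnn.
Qed.

Lemma ele_by_fin u v : (forall k, ele (Some k) u -> ele (Some k) v) -> ele u v.
Proof.
case: u => [m|] H; first by apply: H; exact: leqnn.
case: v H => [n|] H //; have := H n.+1 I; by rewrite /= ltnn.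
Qed.

Import GRing.Theory.
Local Open Scope ring_scope.

Lemma lift_ltn n (p : 'I_n.+1) (i j : 'I_n) : (lift p i < lift p j)%N = (i < j)%N.
Proof. by rewrite /= !ltnNge leq_bump2. Qed.

Lemma pre_lift_img n (p : 'I_n.+1) (X : {set 'I_n}) : lift p @^-1: (lift p @: X) = X.
Proof. by apply/setP => i; rewrite inE mem_imset //; exact: lift_inj. Qed.

Lemma pre_lift_img1 n (p : 'I_n.+1) (X : {set 'I_n}) : lift p @^-1: (p |: lift p @: X) = X.
Proof.
apply/setP => i; rewrite !inE mem_imset; last exact: lift_inj.
by rewrite eq_sym (negbTE (neq_lift p i)).
Qed.

Lemma p_notin_img n (p : 'I_n.+1) (X : {set 'I_n}) : p \notin lift p @: X.
Proof. by apply/imsetP => -[j _ /eqP]; rewrite (negbTE (neq_lift p j)). Qed.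

Lemma decomp0 n (p : 'I_n.+1) (S : {set 'I_n.+1}) : p \notin S -> S = lift p @: (lift p @^-1: S).
Proof.
move=> pS; apply/setP => i; apply/idP/imsetP.
  move=> iS; have pi : p != i by apply: contraNneq pS => ->.
  case: (unlift_some pi) => j ? _; subst i.
  by exists j; rewrite // inE.
by case=> j; rewrite inE => ? ->.
Qed.

Lemma decomp1 n (p : 'I_n.+1) (S : {set 'I_n.+1}) : p \in S -> S = p |: lift p @: (lift p @^-1: S).
Proof.
move=> pS; apply/setP => i; rewrite in_setU1; apply/idP/orP.
  move=> iS; case: (eqVneq i p) => [->|ip]; first by left.
  right; have pi : p != i by rewrite eq_sym.
  case: (unlift_some pi) => j ? _; subst i.
  by apply/imsetP; exists j; rewrite // inE.
case=> [/eqP -> //|/imsetP [j]]; by rewrite inE => ? ->.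
Qed.

Lemma card_img n (p : 'I_n.+1) (X : {set 'I_n}) : #|lift p @: X| = #|X|.
Proof. by rewrite card_imset //; exact: lift_inj. Qed.

Lemma card_img1 n (p : 'I_n.+1) (X : {set 'I_n}) : #|p |: lift p @: X| = (#|X|).+1.
Proof. by rewrite cardsU1 p_notin_img card_img. Qed.

Lemma card_sepU1 (I : finType) (X : {set I}) k (P : pred I) :
  k \notin X -> #|[set m in k |: X | P m]| = (P k + #|[set m in X | P m]|)%N.
Proof.
move=> kX; case Pk: (P k).
  have -> : [set m in k |: X | P m] = k |: [set m in X | P m].
    by apply/setP => m; rewrite !inE; case: eqP => [->|]; rewrite ?Pk ?orbT.
  by rewrite cardsU1 inE (negbTE kX).
have -> // : [set m in k |: X | P m] = [set m in X | P m].
by apply/setP => m; rewrite !inE; case: eqP => [->|]; rewrite ?Pk ?andbF.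
Qed.

Lemma cnt_img n (p : 'I_n.+1) (X : {set 'I_n}) (j : 'I_n) :
  #|[set k in lift p @: X | (k < lift p j)%N]| = #|[set k in X | (k < j)%N]|.
Proof.
have -> : [set k in lift p @: X | (k < lift p j)%N] = lift p @: [set k in X | (k < j)%N].
  apply/setP => k; rewrite inE; apply/andP/imsetP.
    case=> /imsetP [i iX ->]; rewrite lift_ltn => ij; by exists i; rewrite // inE iX.
  case=> i; rewrite inE => /andP [iX ij] kE; subst k; split; [by apply/imsetP; exists i | by rewrite lift_ltn].
by rewrite card_img.
Qed.

Lemma img_D1 n (p : 'I_n.+1) (X : {set 'I_n}) (j : 'I_n) :
  (lift p @: X) :\ lift p j = lift p @: (X :\ j).
Proof.
apply/setP => k; rewrite !inE; apply/andP/imsetP.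
  case=> kj /imsetP [i iX ki]; exists i; last by []; rewrite !inE iX andbT.
  by apply: contraNneq kj => <-; rewrite ki.
case=> i; rewrite !inE => /andP [ij iX] kE; subst k; split; last by apply/imsetP; exists i.
by rewrite (inj_eq (@lift_inj _ p)).
Qed.

Section Kos.
Variable T : comPzRingType.

Definition sgn l (Y : {set 'I_l}) (j : 'I_l) : T := (-1) ^+ #|[set m in Y | (m < j)%N]|.
Definition dd l (x : 'I_l -> T) (phi : {set 'I_l} -> T) (Y : {set 'I_l}) : T :=
  \sum_(j in Y) sgn Y j * x j * phi (Y :\ j).

Lemma ddE l (x : 'I_l -> T) phi Y : koszul_diff (fun r : T => r) x phi Y = dd x phi Y.
Proof. by []. Qed.

Lemma sgnD1 l (Y : {set 'I_l}) j : sgn (Y :\ j) j = sgn Y j.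
Proof.
rewrite /sgn; have -> // : [set m in Y :\ j | (m < j)%N] = [set m in Y | (m < j)%N].
apply/setP => m; rewrite !inE.
by case: (eqVneq m j) => [->|]; rewrite ?ltnn ?andbF.
Qed.

Lemma sgnU1 l (Y : {set 'I_l}) k j : k \notin Y -> sgn (k |: Y) j = (-1) ^+ (k < j)%N * sgn Y j.
Proof. by move=> kY; rewrite /sgn card_sepU1 // exprD. Qed.

Lemma sgn2 l (Y : {set 'I_l}) j : sgn Y j * sgn Y j = 1.
Proof. by rewrite -exprMn mulrNN mulr1 expr1n. Qed.

Lemma sgn_swap l (Y : {set 'I_l}) j k : j \in Y -> k \notin Y ->
  sgn Y k * sgn (k |: Y) j = - (sgn Y j * sgn (Y :\ j) k).
Proof.
move=> jY kY.
have E1 : sgn Y k = (-1) ^+ (j < k)%N * sgn (Y :\ j) k.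
  by rewrite -{1}(setD1K jY) sgnU1 // !inE eqxx.
rewrite E1 sgnU1 //.
have jk : j != k by apply: contraNneq kY => <-.
case: (ltngtP j k) => h; last by move: jk; rewrite -(inj_eq val_inj) /= h eqxx.
  rewrite /= expr1 expr0; ring.
rewrite /= expr1 expr0; ring.
Qed.

Lemma compl_D1 l (Y : {set 'I_l}) j : j \in Y -> ~: (Y :\ j) = j |: ~: Y.
Proof. by move=> jY; apply/setP => m; rewrite !inE; case: (eqVneq m j) => [->|]. Qed.

Lemma U1_D1 l (Y : {set 'I_l}) j k : j != k -> (k |: Y) :\ j = k |: (Y :\ j).
Proof. by move=> jk; apply/setP => m; rewrite !inE; case: (eqVneq m j) => [->|]; rewrite ?(negbTE jk) ?andbF. Qed.

Definition khom l (c : 'I_l -> T) (phi : {set 'I_l} -> T) (Y : {set 'I_l}) : T :=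
  \sum_(k in ~: Y) sgn Y k * c k * phi (k |: Y).

Lemma homotopy l (x c : 'I_l -> T) (phi0 : {set 'I_l} -> T) :
  (forall Y, dd x phi0 Y = 0) ->
  forall Y, dd x (khom c phi0) Y = (\sum_k c k * x k) * phi0 Y.
Proof.
move=> cyc Y.
pose F j k := sgn Y j * x j * (sgn (Y :\ j) k * c k * phi0 (k |: (Y :\ j))).
have step1 : forall j, j \in Y -> sgn Y j * x j * khom c phi0 (Y :\ j) =
    c j * x j * phi0 Y + \sum_(k in ~: Y) F j k.
  move=> j jY; rewrite /khom compl_D1 // big_setU1 /=; last by rewrite !inE jY.
  rewrite mulrDr mulr_sumr; congr (_ + _).
  rewrite sgnD1 (setD1K jY).
  transitivity ((sgn Y j * sgn Y j) * (c j * x j * phi0 Y)); first by ring.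
  by rewrite sgn2 mul1r.
have step2 : forall k, k \in ~: Y -> \sum_(j in Y) F j k = c k * x k * phi0 Y.
  move=> k; rewrite inE => kY.
  have E := congr1 (fun t => sgn Y k * c k * t) (cyc (k |: Y)).
  move: E; rewrite /= mulr0 /dd big_setU1 /=; last by [].
  rewrite setU1K // sgnU1 // ltnn expr0 mul1r mulrDr mulr_sumr.
  have -> : sgn Y k * c k * (sgn Y k * x k * phi0 Y) = c k * x k * phi0 Y.
    transitivity ((sgn Y k * sgn Y k) * (c k * x k * phi0 Y)); first by ring.
    by rewrite sgn2 mul1r.
  rewrite (eq_bigr (fun j => - F j k)).
    by rewrite sumrN => /eqP; rewrite subr_eq0 => /eqP ->.
  move=> j jY; have jk : j != k by apply: contraNneq kY => <-.
  rewrite U1_D1 //.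
  transitivity ((sgn Y k * sgn (k |: Y) j) * (c k * x j * phi0 (k |: (Y :\ j)))); first by ring.
  rewrite sgn_swap //; rewrite /F; ring.
rewrite /dd (eq_bigr _ step1) big_split /= exchange_big /=.
rewrite (eq_bigr _ step2) mulr_suml [RHS](bigID (fun k => k \in Y)) /=.
congr (_ + _); apply: eq_bigl => k; by rewrite inE.
Qed.

Definition ins n (p : 'I_n.+1) (x : 'I_n -> T) (z : T) : 'I_n.+1 -> T :=
  fun i => if unlift p i is Some j then x j else z.

Lemma ins_lift n (p : 'I_n.+1) x z j : ins p x z (lift p j) = x j.
Proof. by rewrite /ins liftK. Qed.

Lemma ins_p n (p : 'I_n.+1) x z : ins p x z p = z.
Proof. by rewrite /ins unlift_none. Qed.

Lemma dd_ext l (x : 'I_l -> T) (f g : {set 'I_l} -> T) X : (forall Y, f Y = g Y) -> dd x f X = dd x g X.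
Proof. by move=> H; rewrite /dd; apply: eq_bigr => j _; rewrite H. Qed.

Lemma dd_lin l (x : 'I_l -> T) (f g : {set 'I_l} -> T) a X :
  dd x (fun Y => f Y + a * g Y) X = dd x f X + a * dd x g X.
Proof.
rewrite /dd mulr_sumr -big_split /=; apply: eq_bigr => j _; ring.
Qed.

Lemma dd0 l (x : 'I_l -> T) X : dd x (fun _ => 0) X = 0.
Proof. by rewrite /dd big1 // => j _; rewrite mulr0. Qed.

Lemma split0 n (p : 'I_n.+1) x z (psi : {set 'I_n.+1} -> T) (X : {set 'I_n}) :
  dd (ins p x z) psi (lift p @: X) = dd x (fun Y => psi (lift p @: Y)) X.
Proof.
rewrite /dd big_imset /=; last by move=> i j _ _; exact: lift_inj.
by apply: eq_bigr => j _; rewrite /sgn cnt_img ins_lift img_D1.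
Qed.

Lemma split1 n (p : 'I_n.+1) x z (psi : {set 'I_n.+1} -> T) (X : {set 'I_n}) : dd (ins p x z) psi (p |: lift p @: X) =
  (-1) ^+ #|[set k in lift p @: X | (k < p)%N]| * z * psi (lift p @: X) +
  \sum_(j in X) (-1) ^+ (p < lift p j)%N * sgn X j * x j * psi (p |: lift p @: (X :\ j)).
Proof.
rewrite /dd big_setU1 /= ?p_notin_img //; congr (_ + _).
  by rewrite /sgn card_sepU1 ?p_notin_img // ltnn add0n ins_p setU1K ?p_notin_img.
rewrite big_imset /=; last by move=> i j _ _; exact: lift_inj.
apply: eq_bigr => j _.
rewrite sgnU1 ?p_notin_img // /sgn cnt_img ins_lift U1_D1 ?img_D1 //.
by rewrite eq_sym neq_lift.
Qed.

Lemma split1_front n (x : 'I_n -> T) z (psi : {set 'I_n.+1} -> T) (X : {set 'I_n}) :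
  dd (ins ord0 x z) psi (ord0 |: lift ord0 @: X) =
  z * psi (lift ord0 @: X) - dd x (fun Y => psi (ord0 |: lift ord0 @: Y)) X.
Proof.
rewrite split1.
have -> : [set k in lift ord0 @: X | (k < (@ord0 n))%N] = set0.
  by apply/setP => k; rewrite !inE ltn0 andbF.
rewrite cards0 expr0 mul1r /dd -sumrN; congr (_ + _); apply: eq_bigr => j _.
rewrite /= expr1; ring.
Qed.

Lemma val_lift_max n (j : 'I_n) : nat_of_ord (lift ord_max j) = j.
Proof. by rewrite /= /bump leqNgt ltn_ord. Qed.

Lemma split1_back n (x : 'I_n -> T) z (psi : {set 'I_n.+1} -> T) (X : {set 'I_n}) :
  dd (ins ord_max x z) psi (ord_max |: lift ord_max @: X) =
  (-1) ^+ #|X| * z * psi (lift ord_max @: X) + dd x (fun Y => psi (ord_max |: lift ord_max @: Y)) X.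
Proof.
rewrite split1.
have -> : [set k in lift ord_max @: X | (k < (@ord_max n))%N] = lift ord_max @: X.
  apply/setP => k; rewrite !inE; apply/andP/idP => [[]//|kX]; split => //.
  by case/imsetP: kX => j _ ->; rewrite val_lift_max ltn_ord.
rewrite card_img; congr (_ + _); apply: eq_bigr => j _.
by rewrite val_lift_max ltnNge /= ltnW // expr0 mul1r.
Qed.

Lemma split_sets n (p : 'I_n.+1) (P : {set 'I_n.+1} -> Prop) :
  (forall X : {set 'I_n}, P (lift p @: X)) -> (forall X : {set 'I_n}, P (p |: lift p @: X)) -> forall S, P S.
Proof.
move=> H0 H1 S; case: (boolP (p \in S)) => h.
  by rewrite (decomp1 h).
by rewrite (decomp0 h).
Qed.
End Kos.

Section Kos2.
Variable T : comPzRingType.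
Variable M : T -> Prop.
Hypothesis M0 : M 0.
Hypothesis MD : forall u v, M u -> M v -> M (u + v).
Hypothesis MN : forall u, M u -> M (- u).
Variable Sr : T -> Prop.
Hypothesis SM : forall s u, Sr s -> M u -> M (s * u).

Definition nz l (x : 'I_l -> T) i := koszul_cohom_nonzero (fun r : T => r) M x i.

Lemma M_sum (I : Type) (r : seq I) (P : pred I) (F : I -> T) :
  (forall i, M (F i)) -> M (\sum_(i <- r | P i) F i).
Proof. by move=> H; apply: big_ind. Qed.

Lemma M_sgn e u : M u -> M ((-1) ^+ e * u).
Proof.
move=> Mu; elim: e => [|e IH]; first by rewrite expr0 mul1r.
by rewrite exprS mulN1r mulNr; apply: MN.
Qed.

Lemma triv0 l (x : 'I_l -> T) phi : ~ nz x 0 -> koszul_cochain M 0 phi ->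
  (forall S, dd x phi S = 0) -> forall S, phi S = 0.
Proof.
move=> H c cy; apply: NNPP => hn; apply: H; exists phi; split => //; split => //.
case=> [h|[]//]; apply: hn => S; exact: h.
Qed.

Lemma trivS l (x : 'I_l -> T) i phi : ~ nz x i -> (0 < i)%N -> koszul_cochain M i phi ->
  (forall S, dd x phi S = 0) ->
  exists psi, koszul_cochain M i.-1 psi /\ forall S, dd x psi S = phi S.
Proof.
move=> H ipos c cy; apply: NNPP => hn; apply: H; exists phi; split => //; split => //.
case=> [h|[_ h]]; last exact: hn.
apply: hn; exists (fun _ => 0); split; first by split.
by move=> S; rewrite dd0 h.
Qed.

Lemma L2 n (x : 'I_n -> T) (c : 'I_n -> T) i : (forall k, Sr (c k)) ->
  nz x i -> nz (ins ord0 x (\sum_k c k * x k)) i.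
Proof.
move=> Sc [phi0 [[phM phZ] [phC phN]]].
set z := \sum_k c k * x k.
pose phi1 := khom c phi0.
pose phi (S : {set 'I_n.+1}) := if ord0 \in S then phi1 (lift ord0 @^-1: S) else phi0 (lift ord0 @^-1: S).
have phiE0 : forall X : {set 'I_n}, phi (lift ord0 @: X) = phi0 X.
  by move=> X; rewrite /phi (negbTE (p_notin_img _ _)) pre_lift_img.
have phiE1 : forall X : {set 'I_n}, phi (ord0 |: lift ord0 @: X) = phi1 X.
  by move=> X; rewrite /phi setU11 pre_lift_img1.
exists phi; split; [split|split].
- move=> S; rewrite /phi; case: ifP => _ //.
  rewrite /phi1 /khom; apply: M_sum => k; rewrite -mulrA; apply: M_sgn; exact: SM.
- apply: (@split_sets n ord0) => X.
    by rewrite card_img phiE0; exact: phZ.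
  rewrite card_img1 phiE1 => hX; rewrite /phi1 /khom big1 // => k; rewrite inE => kX.
  by rewrite phZ ?mulr0 // cardsU1 kX.
- apply: (@split_sets n ord0) => X.
    rewrite ddE split0 (@dd_ext _ _ _ _ phi0); first exact: phC.
    by move=> Y; rewrite phiE0.
  rewrite ddE split1_front phiE0 (@dd_ext _ _ _ _ phi1); last by move=> Y; rewrite phiE1.
  rewrite homotopy; first by rewrite subrr.
  exact: phC.
- move=> h; apply: phN; case: h => [allz|[ipos [psi [[psM psZ] psD]]]].
    by left => X; rewrite -phiE0.
  right; split => //; exists (fun Y : {set 'I_n} => psi (lift ord0 @: Y)); split.
    by split => // Y hY; apply: psZ; rewrite card_img.
  by move=> X; rewrite -phiE0 -psD !ddE split0.
Qed.

Lemma L1 n (x : 'I_n -> T) z i : Sr z ->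
  (forall i', (i' <= i)%N -> ~ nz x i') -> ~ nz (ins ord_max x z) i.
Proof.
move=> Sz H [phi [[phM phZ] [phC phN]]]; apply: phN.
pose phi0 (X : {set 'I_n}) := phi (lift ord_max @: X).
pose phi1 (X : {set 'I_n}) := phi (ord_max |: lift ord_max @: X).
have c0 : koszul_cochain M i phi0.
  by split => [X|X h]; [exact: phM | apply: phZ; rewrite card_img].
have cy0 : forall X : {set 'I_n}, dd x phi0 X = 0.
  by move=> X; rewrite -(@split0 _ _ ord_max x z); exact: phC.
have rel : forall X : {set 'I_n}, (-1) ^+ #|X| * z * phi0 X + dd x phi1 X = 0.
  by move=> X; rewrite -(@split1_back _ _ x z); exact: phC.
case: i H phZ c0 => [|i'] H phZ c0.
  left; apply: (@split_sets n ord_max) => X.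
    exact: (triv0 (H 0%N (leqnn _)) c0 cy0).
  by apply: phZ; rewrite card_img1.
have [psi0 [[ps0M ps0Z] ps0D]] := trivS (H _ (leqnn _)) (ltn0Sn _) c0 cy0.
pose phi1' (X : {set 'I_n}) := phi1 X + (- (-1) ^+ i' * z) * psi0 X.
have c1 : koszul_cochain M i' phi1'.
  split => X.
    by apply: MD; [exact: phM | rewrite -mulrA mulNr; apply: MN; apply: M_sgn; exact: SM].
  move=> hX; rewrite /phi1' ps0Z // mulr0 addr0; apply: phZ; by rewrite card_img1.
have cy1 : forall X : {set 'I_n}, dd x phi1' X = 0.
  move=> X; rewrite dd_lin ps0D.
  have := rel X; move/eqP; rewrite addrC addr_eq0 => /eqP ->.
  case: (eqVneq #|X| i'.+1) => hX.
    rewrite hX exprS; ring.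
  have -> : phi0 X = 0 by apply: (proj2 c0).
  by rewrite !mulr0 oppr0 addr0.
have [Psi1 [Ps1M [Ps1Z Ps1D]]] : exists Psi1 : {set 'I_n} -> T,
    (forall X, M (Psi1 X)) /\ (forall X : {set 'I_n}, (#|X|).+1 != i' -> Psi1 X = 0) /\
    forall X, dd x Psi1 X = phi1' X.
  case: (posnP i') => hi.
    exists (fun _ => 0); split => //; split => // X.
    by rewrite dd0 (triv0 (H 0%N (leq0n _)) _ cy1) // -hi.
  have [psi1 [[ps1M ps1Z] ps1D]] := trivS (H i' (leqnSn _)) hi c1 cy1.
  exists psi1; split => //; split => // X hX; apply: ps1Z.
  by move: hX; rewrite -{1}(prednK hi) eqSS.
right; split => //.
pose Psi (S : {set 'I_n.+1}) := if ord_max \in S then Psi1 (lift ord_max @^-1: S) else psi0 (lift ord_max @^-1: S).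
have PsiE0 : forall X : {set 'I_n}, Psi (lift ord_max @: X) = psi0 X.
  by move=> X; rewrite /Psi (negbTE (p_notin_img _ _)) pre_lift_img.
have PsiE1 : forall X : {set 'I_n}, Psi (ord_max |: lift ord_max @: X) = Psi1 X.
  by move=> X; rewrite /Psi setU11 pre_lift_img1.
exists Psi; split; first split.
- by move=> S; rewrite /Psi; case: ifP.
- apply: (@split_sets n ord_max) => X.
    by rewrite card_img PsiE0; exact: ps0Z.
  by rewrite card_img1 PsiE1; exact: Ps1Z.
- apply: (@split_sets n ord_max) => X.
    rewrite ddE split0 (@dd_ext _ _ _ _ psi0); last by move=> Y; rewrite PsiE0.
    by rewrite ps0D.
  rewrite ddE split1_back PsiE0 (@dd_ext _ _ _ _ Psi1); last by move=> Y; rewrite PsiE1.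
  rewrite Ps1D /phi1'.
  case: (eqVneq #|X| i') => hX.
    rewrite hX /phi1; ring.
  by rewrite ps0Z // !mulr0 add0r addr0.
Qed.
End Kos2.

Section Mono.
Variable T : comPzRingType.
Variable M : T -> Prop.
Hypothesis M0 : M 0.
Hypothesis MD : forall u v, M u -> M v -> M (u + v).
Hypothesis MN : forall u, M u -> M (- u).
Variable Sr : T -> Prop.
Hypothesis SM : forall s u, Sr s -> M u -> M (s * u).
Hypothesis S0 : Sr 0.
Hypothesis SD : forall u v, Sr u -> Sr v -> Sr (u + v).

Definition gk l (x : 'I_l -> T) := Kgrade_seq (fun r : T => r) M x.

Definition inI n (x : 'I_n -> T) t := exists c : 'I_n -> T, (forall k, Sr (c k)) /\ t = \sum_k c k * x k.

Lemma gk_L2 n (x : 'I_n -> T) c : (forall k, Sr (c k)) ->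
  ele (gk (ins ord0 x (\sum_k c k * x k))) (gk x).
Proof.
move=> Sc; case E: (gk x) => [i|]; last exact: ele_None.
apply: einf_le; apply: (L2 M0 MD MN SM) => //; exact: (einf_some E).
Qed.

Lemma gk_L1 n (x : 'I_n -> T) z : Sr z -> ele (gk x) (gk (ins ord_max x z)).
Proof.
move=> Sz; case E: (gk (ins ord_max x z)) => [i|]; last exact: ele_None.
have nzw := einf_some E.
have [i' [i'i nzx]] : exists i', (i' <= i)%N /\ nz M x i'.
  apply: NNPP => h; apply: (L1 M0 MD MN SM Sz) nzw => i' i'i nzx; apply: h; by exists i'.
apply: ele_trans (einf_le nzx) _; exact: i'i.
Qed.

Lemma gk_cast l l' (e : l = l') (x : 'I_l -> T) (x' : 'I_l' -> T) :
  (forall i, x' i = x (cast_ord (esym e) i)) -> gk x = gk x'.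
Proof.
subst l' => H; have -> // : x' = x.
by apply: functional_extensionality => i; rewrite H cast_ord_id.
Qed.

Lemma ins_eta n (p : 'I_n.+1) (w : 'I_n.+1 -> T) : ins p (fun i => w (lift p i)) (w p) = w.
Proof.
apply: functional_extensionality => i; rewrite /ins.
by case: unliftP => [j ->|->].
Qed.

Lemma gk_prefix l (w : 'I_l -> T) m (y : 'I_m -> T) : (forall i, Sr (w i)) -> (m <= l)%N ->
  (forall (i : 'I_l) (j : 'I_m), nat_of_ord i = nat_of_ord j -> w i = y j) -> ele (gk y) (gk w).
Proof.
elim: l w => [|l IH] w Sw ml H.
  have e : m = 0%N by apply/eqP; rewrite -leqn0.
  rewrite (gk_cast (e:=e) (x:=y) (x' := w)); first exact: ele_refl; move=> i; by apply: H.
case: (eqVneq m l.+1) => [e|ne].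
  rewrite (gk_cast (e:=e) (x:=y) (x' := w)); first exact: ele_refl; move=> i; by apply: H.
have ml' : (m <= l)%N by rewrite -ltnS ltn_neqAle ne ml.
apply: ele_trans (IH (fun i => w (lift ord_max i)) _ ml' _) _.
- by move=> i; apply: Sw.
- by move=> i j e; apply: H; rewrite val_lift_max.
rewrite -{2}(ins_eta ord_max w); exact: gk_L1.
Qed.

Lemma gk_suffix l (w : 'I_l -> T) n (x : 'I_n -> T) : (n <= l)%N ->
  (forall (i : 'I_l) (j : 'I_n), nat_of_ord i = (l - n + j)%N -> w i = x j) ->
  (forall i : 'I_l, (i < l - n)%N -> inI x (w i)) -> ele (gk w) (gk x).
Proof.
elim: l w => [|l IH] w nl H Hi.
  have e : 0%N = n by apply/eqP; rewrite eq_sym -leqn0.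
  rewrite (gk_cast (e:=e) (x:=w) (x' := x)); first exact: ele_refl; move=> i; symmetry; apply: H.
  by rewrite /= sub0n.
case: (eqVneq n l.+1) => [e|ne].
  rewrite (gk_cast (e:=esym e) (x:=w) (x' := x)); first exact: ele_refl; move=> i; symmetry; apply: H.
  by rewrite /= -{1}e subnn.
have nl' : (n <= l)%N by rewrite -ltnS ltn_neqAle ne nl.
pose w' := fun i : 'I_l => w (lift ord0 i).
have IH' : ele (gk w') (gk x).
  apply: IH => //.
    move=> i j e; apply: H; by rewrite /= /bump leq0n add1n e subSn.
  move=> i il; apply: Hi; by rewrite /= /bump leq0n add1n subSn.
apply: ele_trans _ IH'.
have [c [Sc wE]] : inI x (w ord0) by apply: Hi; rewrite subSn.
pose c' := fun i : 'I_l => \sum_(j : 'I_n | nat_of_ord i == (l - n + j)%N) c j.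
have Sc' : forall i, Sr (c' i) by move=> i; apply: big_ind.
rewrite -{1}(ins_eta ord0 w) -/w'.
have -> : w ord0 = \sum_i c' i * w' i.
  rewrite wE /c'; symmetry.
  under eq_bigr => i _ do rewrite mulr_suml big_mkcond.
  rewrite exchange_big /=; apply: eq_bigr => j _.
  have jl : (l - n + j < l)%N by rewrite -{2}(subnK nl') ltn_add2l.
  rewrite (bigD1 (Ordinal jl)) //= eqxx big1 ?addr0.
    congr (_ * _); rewrite /w'; apply: H; by rewrite /= /bump leq0n add1n subSn.
  move=> i ij; case: eqP => // e; case/eqP: ij; exact: val_inj.
exact: gk_L2.
Qed.

Definition catf m n (y : 'I_m -> T) (x : 'I_n -> T) : 'I_(m + n) -> T :=
  fun i => match split i with inl j => y j | inr k => x k end.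

Lemma catf_l m n y x (j : 'I_m) : catf y x (lshift n j) = y j.
Proof.
rewrite /catf; case: splitP => [j' /= e|k /= e].
  by congr y; apply: val_inj.
by have := ltn_ord j; rewrite e ltnNge leq_addr.
Qed.

Lemma catf_r m n y x (k : 'I_n) : catf y x (rshift m k) = x k.
Proof.
rewrite /catf; case: splitP => [j' /= e|k' /= e].
  by have := ltn_ord j'; rewrite -e ltnNge leq_addr.
by congr x; apply: val_inj; move/eqP: e; rewrite eqn_add2l => /eqP.
Qed.

Lemma gk_mono m (y : 'I_m -> T) n (x : 'I_n -> T) :
  (forall j, Sr (y j)) -> (forall k, Sr (x k)) -> (forall j, inI x (y j)) -> ele (gk y) (gk x).
Proof.
move=> Sy Sx Iy; pose w := catf y x.
apply: (@ele_trans _ (gk w)).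
  apply: gk_prefix; first (by move=> i; rewrite /w /catf; case: split); first exact: leq_addr.
  move=> i j e; have -> : i = lshift n j by apply: val_inj.
  exact: catf_l.
apply: gk_suffix; first exact: leq_addl.
  move=> i j e; have -> : i = rshift m j by apply: val_inj; rewrite /= e addnK.
  exact: catf_r.
move=> i; rewrite addnK => im; have -> : i = lshift n (Ordinal im) by apply: val_inj.
rewrite /w catf_l; exact: Iy.
Qed.

Lemma inI_catl m n (x : 'I_m -> T) (x' : 'I_n -> T) t : inI x t -> inI (catf x x') t.
Proof.
case=> c [Sc ->]; exists (catf c (fun _ => 0)); split.
  by move=> i; rewrite /catf; case: split.
rewrite big_split_ord /= [X in _ + X]big1 ?addr0.
  by apply: eq_bigr => i _; rewrite !catf_l.
by move=> i _; rewrite catf_r mul0r.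
Qed.

Lemma inI_catr m n (x : 'I_m -> T) (x' : 'I_n -> T) t : inI x' t -> inI (catf x x') t.
Proof.
case=> c [Sc ->]; exists (catf (fun _ => 0) c); split.
  by move=> i; rewrite /catf; case: split.
rewrite big_split_ord /= [X in _ = X + _]big1 ?add0r.
  by apply: eq_bigr => i _; rewrite !catf_r.
by move=> i _; rewrite catf_l mul0r.
Qed.

Lemma inI_at (S1 : Sr 1) n (x : 'I_n -> T) j : inI x (x j).
Proof.
exists (fun k => if k == j then 1 else 0); split.
  by move=> k; case: eqP.
rewrite (bigD1 j) //= eqxx mul1r big1 ?addr0 // => k kj; by rewrite (negbTE kj) mul0r.
Qed.
End Mono.

Lemma kd0 (R T : comPzRingType) (g : R -> T) l (x : 'I_l -> R) S :
  koszul_diff g x (fun _ => 0) S = 0.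
Proof. by rewrite /koszul_diff big1 // => j _; rewrite mulr0. Qed.

Lemma gtriv0 (R T : comPzRingType) (g : R -> T) (M : T -> Prop) l (x : 'I_l -> R) phi :
  ~ koszul_cohom_nonzero g M x 0 -> koszul_cochain M 0 phi ->
  (forall S, koszul_diff g x phi S = 0) -> forall S, phi S = 0.
Proof.
move=> H c cy; apply: NNPP => hn; apply: H; exists phi; split => //; split => //.
case=> [h|[]//]; apply: hn => S; exact: h.
Qed.

Lemma gtrivS (R T : comPzRingType) (g : R -> T) (M : T -> Prop) l (x : 'I_l -> R) i phi :
  M 0 -> ~ koszul_cohom_nonzero g M x i -> (0 < i)%N -> koszul_cochain M i phi ->
  (forall S, koszul_diff g x phi S = 0) ->
  exists psi, koszul_cochain M i.-1 psi /\ forall S, koszul_diff g x psi S = phi S.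
Proof.
move=> M0 H ipos c cy; apply: NNPP => hn; apply: H; exists phi; split => //; split => //.
case=> [h|[_ h]]; last exact: hn.
apply: hn; exists (fun _ => 0); split; first by split.
by move=> S; rewrite kd0 h.
Qed.

Section Amal.
Variables (A B : comPzRingType) (f : {rmorphism A -> B}) (J : B -> Prop).
Hypothesis HJ : is_ideal J.

Lemma J0 : J 0. Proof. by case: HJ. Qed.
Lemma JD u v : J u -> J v -> J (u + v). Proof. by case: HJ => _ [H _]; apply: H. Qed.
Lemma JM r u : J u -> J (r * u). Proof. by case: HJ => _ [_ H]; apply: H. Qed.
Lemma JN u : J u -> J (- u). Proof. by move=> Ju; rewrite -mulN1r; apply: JM. Qed.

Local Notation am := (amalg f J).

Lemma am0 : am 0. Proof. by exists 0; split; [exact: J0 | rewrite /= rmorph0 addr0]. Qed.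
Lemma am1 : am 1. Proof. by exists 0; split; [exact: J0 | rewrite /= rmorph1 addr0]. Qed.
Lemma amD u v : am u -> am v -> am (u + v).
Proof.
case=> j [Jj uj] [k [Jk vk]]; exists (j + k); split; first exact: JD.
by rewrite /= uj vk rmorphD; ring.
Qed.
Lemma amN u : am u -> am (- u).
Proof. case=> j [Jj uj]; exists (- j); split; first exact: JN. by rewrite /= uj rmorphN opprD. Qed.
Lemma amM u v : am u -> am v -> am (u * v).
Proof.
case=> j [Jj uj] [k [Jk vk]]; exists (f u.1 * k + (f v.1 * j + j * k)); split.
  by apply: JD; [exact: JM | apply: JD; exact: JM].
by rewrite /= uj vk rmorphM; ring.
Qed.
Lemma am_iota a : am (a, f a). Proof. by exists 0; split; [exact: J0 | rewrite addr0]. Qed.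

Definition emb l (a : {set 'I_l} -> A) (b : {set 'I_l} -> B) : {set 'I_l} -> A * B :=
  fun Y => (a Y, f (a Y) + b Y).
Definition iotaf l (x : 'I_l -> A) : 'I_l -> A * B := fun k => (x k, f (x k)).
Definition pj l (psi : {set 'I_l} -> A * B) : {set 'I_l} -> B := fun Y => (psi Y).2 - f (psi Y).1.

Lemma sign_pair n : ((-1) ^+ n : A * B) = ((-1) ^+ n, (-1) ^+ n).
Proof. by elim: n => [|n IH] //; rewrite !exprS IH. Qed.

Lemma sum_pair (I : finType) (P : pred I) (F : I -> A * B) :
  \sum_(i | P i) F i = (\sum_(i | P i) (F i).1, \sum_(i | P i) (F i).2).
Proof.
apply: (big_rec3 (fun s a b => s = (a, b))) => // i y1 y2 y3 _ ->.
by [].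
Qed.

Lemma dE l (x : 'I_l -> A) a b S :
  koszul_diff (fun z => z) (iotaf x) (emb a b) S =
  emb (koszul_diff (fun r => r) x a) (koszul_diff f x b) S.
Proof.
rewrite /koszul_diff /emb sum_pair /=; congr pair.
  by apply: eq_bigr => j _; rewrite sign_pair.
rewrite rmorph_sum -big_split /=; apply: eq_bigr => j _.
rewrite sign_pair /= !rmorphM rmorph_sign; ring.
Qed.

Lemma emb_eta l (psi : {set 'I_l} -> A * B) : emb (fun Y => (psi Y).1) (pj psi) = psi.
Proof.
apply: functional_extensionality => Y; rewrite /emb /pj.
by case: (psi Y) => u v /=; rewrite addrC subrK.
Qed.

Lemma pjJ l (psi : {set 'I_l} -> A * B) Y : am (psi Y) -> J (pj psi Y).
Proof. by case=> j [Jj e]; rewrite /pj e addrC addKr. Qed.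

Lemma emb_inj l (a a' : {set 'I_l} -> A) b b' Y : emb a b Y = emb a' b' Y -> a Y = a' Y /\ b Y = b' Y.
Proof. by case=> e1; rewrite e1 => /addrI. Qed.

Lemma emb_am l (a : {set 'I_l} -> A) b Y : J (b Y) -> am (emb a b Y).
Proof. by move=> Jb; exists (b Y). Qed.

Lemma emb_eq0 l (a : {set 'I_l} -> A) b Y : emb a b Y = 0 -> a Y = 0 /\ b Y = 0.
Proof.
move=> h; have h1 := congr1 fst h; have h2 := congr1 snd h; rewrite /= in h1 h2.
by rewrite h1 rmorph0 add0r in h2.
Qed.

Lemma emb0 l (a : {set 'I_l} -> A) b Y : a Y = 0 -> b Y = 0 -> emb a b Y = 0.
Proof. by move=> ha hb; rewrite /emb ha hb rmorph0 addr0. Qed.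

Lemma nz_am l (x : 'I_l -> A) i :
  koszul_cohom_nonzero (fun z => z) am (iotaf x) i <->
  koszul_cohom_nonzero (fun r => r) (fun _ => True) x i \/ koszul_cohom_nonzero f J x i.
Proof.
split.
  case=> phi [[phM phZ] [phC phN]].
  rewrite -(emb_eta phi) in phZ phC phN.
  set a := fun Y => (phi Y).1 in phZ phC phN.
  set b := pj phi in phZ phC phN.
  have cyA : forall S, koszul_diff (fun r => r) x a S = 0.
    by move=> S; have := phC S; rewrite dE => /emb_eq0 [].
  have cyB : forall S, koszul_diff f x b S = 0.
    by move=> S; have := phC S; rewrite dE => /emb_eq0 [].
  have cA : koszul_cochain (fun _ => True) i a.
    by split => // S h; have := phZ S h => /emb_eq0 [].
  have cB : koszul_cochain J i b.
    split => S; first exact: (pjJ (phM S)).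
    by move=> h; have := phZ S h => /emb_eq0 [].
  apply: NNPP => hn; apply: phN.
  have nA : ~ koszul_cohom_nonzero (fun r => r) (fun _ => True) x i by move=> h; apply: hn; left.
  have nB : ~ koszul_cohom_nonzero f J x i by move=> h; apply: hn; right.
  case: (posnP i) => hi.
    subst i; left => S; apply: emb0; [exact: (gtriv0 nA cA cyA) | exact: (gtriv0 nB cB cyB)].
  have [pa [[paM paZ] paD]] := gtrivS I nA hi cA cyA.
  have [pb [[pbM pbZ] pbD]] := gtrivS J0 nB hi cB cyB.
  right; split => //; exists (emb pa pb); split.
    split => S; first exact: emb_am.
    by move=> h; apply: emb0; [exact: paZ | exact: pbZ].
  by move=> S; rewrite dE /emb paD pbD.
case.
  case=> al [[alM alZ] [alC alN]].
  exists (emb al (fun _ => 0)); split; [split|split].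
  - by move=> S; apply: emb_am; exact: J0.
  - by move=> S h; apply: emb0 => //; exact: alZ.
  - by move=> S; rewrite dE; apply: emb0 => //; rewrite kd0.
  - case=> [h|[hi [psi [[psM psZ] psD]]]]; apply: alN.
      by left => S; have := h S => /emb_eq0 [].
    right; split => //; exists (fun Y => (psi Y).1); split.
      by split => // S h; rewrite psZ.
    move=> S; have := psD S; rewrite -{1}(emb_eta psi) dE => /emb_inj [e _]; exact: e.
case=> be [[beM beZ] [beC beN]].
exists (emb (fun _ => 0) be); split; [split|split].
- by move=> S; apply: emb_am; exact: beM.
- by move=> S h; apply: emb0 => //; exact: beZ.
- by move=> S; rewrite dE; apply: emb0; [rewrite kd0 | exact: beC].
- case=> [h|[hi [psi [[psM psZ] psD]]]]; apply: beN.
    by left => S; have := h S => /emb_eq0 [].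
  right; split => //; exists (pj psi); split.
    split => S; first exact: pjJ.
    by move=> h; rewrite /pj psZ //= rmorph0 subrr.
  move=> S; have := psD S; rewrite -{1}(emb_eta psi) dE => /emb_inj [_ e]; exact: e.
Qed.
End Amal.

Section Top.
Variables (A B : comPzRingType) (f : {rmorphism A -> B}) (J : B -> Prop).
Hypothesis HJ : is_ideal J.
Local Notation am := (amalg f J).

Lemma am0' : am 0.
Proof. by exists 0; split; [exact: J0 HJ | rewrite /= rmorph0 addr0]. Qed.

Lemma g_am_le_A l (x : 'I_l -> A) :
  ele (Kgrade_seq (fun z => z) am (iotaf f x)) (Kgrade_seq (fun r : A => r) (fun _ => True) x).
Proof.
case E: (Kgrade_seq _ _ x) => [i|]; last exact: ele_None.
apply: einf_le; apply/(nz_am f HJ); left; exact: (einf_some E).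
Qed.

Lemma g_am_ge l (x : 'I_l -> A) k :
  ele (Some k) (Kgrade_seq (fun r : A => r) (fun _ => True) x) ->
  ele (Some k) (Kgrade_seq f J x) ->
  ele (Some k) (Kgrade_seq (fun z => z) am (iotaf f x)).
Proof.
move=> hA hJ; case E: (Kgrade_seq _ _ (iotaf f x)) => [i|] //.
have := einf_some E; case/(nz_am f HJ) => h.
  exact: ele_trans hA (einf_le h).
exact: ele_trans hJ (einf_le h).
Qed.

Lemma ext_am a y : ext_ideal f J a y -> am y.
Proof.
case=> n [u [s [_ [sa ->]]]].
apply: (big_ind am) => [|u1 v1 hu hv|i _]; first exact: (am0 f HJ).
  exact: (amD HJ hu hv).
apply: (amM HJ); last exact: sa.
by exists 0; split; [exact: J0 HJ | rewrite /= addr0].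
Qed.

Lemma iota_cat m n (u0 : 'I_m -> A) (u1 : 'I_n -> A) : iotaf f (catf u0 u1) = catf (iotaf f u0) (iotaf f u1).
Proof. by apply: functional_extensionality => i; rewrite /iotaf /catf; case: split. Qed.

Lemma gather (a : A -> Prop) l (y : 'I_l -> A * B) : (forall j, ext_ideal f J a (y j)) ->
  exists n (u : 'I_n -> A), (forall k, a (u k)) /\ forall j, inI am (iotaf f u) (y j).
Proof.
elim: l y => [|l IH] y ya.
  by exists 0%N, (fun _ => 0); split => -[].
have [n1 [u1 [u1a I1]]] := IH (fun j => y (lift ord0 j)) (fun j => ya _).
have [n0 [u0 [s0 [u0a [s0a e0]]]]] := ya ord0.
exists (n0 + n1)%N, (catf u0 u1); split.
  by move=> k; rewrite /catf; case: split.
move=> j; rewrite iota_cat; case: (unliftP ord0 j) => [j' ->|->].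
  by apply: inI_catr; [exact: am0' | exact: I1].
apply: inI_catl; first exact: am0'.
exists s0; split => //; rewrite e0; apply: eq_bigr => i _; exact: mulrC.
Qed.

Lemma core (a : A -> Prop) :
  ele (Kgrade (fun r : A => r) (fun _ => True) a) (Kgrade f J a) ->
  Kgrade (fun z : A * B => z) am (ext_ideal f J a) = Kgrade (fun r : A => r) (fun _ => True) a.
Proof.
move=> H; apply: ele_anti.
  apply: esup_least => _ [l [y [ya ->]]].
  have [n [u [ua Iy]]] := gather ya.
  apply: (@ele_trans _ (Kgrade_seq (fun z => z) am (iotaf f u))).
    apply: (gk_mono am0' (amD HJ) (amN HJ) (amM HJ) am0' (amD HJ)) => //.
      by move=> j; apply: ext_am; exact: ya.
    by move=> k; exists 0; split; [exact: J0 HJ | rewrite /= addr0].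
  apply: ele_trans (g_am_le_A u) _.
  apply: esup_ub; by exists n, u.
apply: esup_least => _ [l [x [xa ->]]]; apply: ele_by_fin => k hk.
have hGA : ele (Some k) (Kgrade (fun r : A => r) (fun _ => True) a).
  by apply: ele_trans hk (esup_ub _); exists l, x.
have hGJ := ele_trans hGA H.
have [_ [[l2 [x2 [x2a ->]]] hk2]] := esup_approx (ex_intro _ _ (ex_intro _ 0%N (ex_intro _ (fun _ : 'I_0 => 0 : A) (conj (fun j : 'I_0 => match j with Ordinal _ p => False_ind _ (notF p) end) erefl)))) hGJ.
pose w := catf x x2.
have J0' := J0 HJ.
have h1 : ele (Kgrade_seq (fun r : A => r) (fun _ => True) x) (Kgrade_seq (fun r : A => r) (fun _ => True) w).
  apply: (@gk_mono A (fun _ => True) I (fun _ _ _ _ => I) (fun _ _ => I) (fun _ => True)) => //.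
  by move=> j; apply: inI_catl => //; exact: inI_at.
have h2 : ele (Kgrade_seq f J x2) (Kgrade_seq f J w).
  apply: (@gk_mono B J J0' (JD HJ) (JN HJ) (fun _ => True) (fun s u _ Ju => JM HJ s Ju)) => //.
  move=> j; have -> : f (x2 j) = (fun i => f (w i)) (rshift l j) by rewrite /= /w catf_r.
  exact: inI_at.
have := g_am_ge (ele_trans hk h1) (ele_trans hk2 h2).
move/ele_trans; apply; apply: esup_ub; exists (l + l2)%N, (iotaf f w); split => //.
move=> j; exists 1%N, (fun _ => w j), (fun _ => 1); split.
  by move=> _; rewrite /w /catf; case: split.
split; first by move=> _; exists 0; split; [exact: J0 HJ | rewrite /= rmorph1 addr0].
by rewrite big_ord1 mulr1.
Qed.
End Top.

Theorem lemma3p2 (A B : comPzRingType) (f : {rmorphism A -> B}) (J : B -> Prop)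
  (HJ : is_ideal J) :
  (CM_in (@is_ideal A) ->
   (forall a : A -> Prop, is_ideal a -> ele (height a) (Kgrade f J a)) ->
   forall a : A -> Prop, is_ideal a ->
     Kgrade (fun z : A * B => z) (amalg f J) (ext_ideal f J a)
       = Kgrade (fun r : A => r) (fun _ => True) a /\
     ele (Kgrade (fun r : A => r) (fun _ => True) a) (Kgrade f J a))
  /\
  (CM_in (@fg_ideal A) ->
   (forall a : A -> Prop, fg_ideal a -> ele (height a) (Kgrade f J a)) ->
   forall a : A -> Prop, fg_ideal a ->
     Kgrade (fun z : A * B => z) (amalg f J) (ext_ideal f J a)
       = Kgrade (fun r : A => r) (fun _ => True) a /\
     ele (Kgrade (fun r : A => r) (fun _ => True) a) (Kgrade f J a)).
Proof.
split => CM H a ia.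
  have le : ele (Kgrade (fun r : A => r) (fun _ => True) a) (Kgrade f J a).
    by rewrite -(CM a ia); exact: H.
  by split => //; exact: core.
have le : ele (Kgrade (fun r : A => r) (fun _ => True) a) (Kgrade f J a).
  by rewrite -(CM a ia); exact: H.
by split => //; exact: core.
Qed.
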